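(* Fix $0<p<1$, $q=1-p$, and integers $L<U$ with $U-L\ge 4$. With the notation of the context, the function $x\mapsto\alpha(x)=\lim_{k\to\infty}\alpha_k(x)$ on the integers $x\in[L,U]$ is the unique solution of the linear system $$\alpha(x)=\begin{cases}0,&x=U,\\ q\,\alpha(x-1),&x=U-1,\\ pq\,\alpha(x)+q\,\alpha(x-1),&x=U-2,\\ pq\,\alpha(x)+p\,\alpha(x+2)-pq\,\alpha(x+1)+q\,\alpha(x-1),&L+1\le x\le U-3,\\ 1,&x=L,\end{cases}$$ and the function $x\mapsto\beta(x)=\lim_{k\to\infty}\beta_k(x)$ on the integers $x\in[L,U]$ is the unique solution of the linear system $$\beta(x)=\begin{cases}1,&x=U,\\ p+q\,\beta(x-1),&x=U-1,\\ p^2+pq\,\beta(x)+q\,\beta(x-1),&x=U-2,\\ pq\,\beta(x)+p\,\beta(x+2)-pq\,\beta(x+1)+q\,\beta(x-1),&L+1\le x\le U-3,\\ 0,&x=L.\end{cases}$$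
   Context: Let $\xi_1,\xi_2,\dots$ be i.i.d. random variables with values in $\{1,-1\}$, $\mathbb{P}(\xi_i=1)=p$, $\mathbb{P}(\xi_i=-1)=q:=1-p$. Define $X_k=-1$ if $\xi_k=-1$; $X_k=2$ if $\xi_k=\xi_{k-1}=1$ (for $k\ge 2$); and $X_k=1$ otherwise (in particular $X_1=1$ when $\xi_1=1$). Let $S_0=0$, $S_k=X_1+\dots+X_k$, and $S^x_k=x+S_k$. For integers $L<U$ and $k\ge 0$ let $\tau^x_k=\min\{l\in\{0,\dots,k\}: S^x_l\le L \text{ or } S^x_l\ge U\}$ if this set is nonempty, and $\tau^x_k=k$ otherwise. Let $\mathcal{A}^x_k=\bigcup_{l=0}^k\{\tau^x_k=l,\ S^x_l\le L\}$, $\mathcal{B}^x_k=\bigcup_{l=0}^k\{\tau^x_k=l,\ S^x_l\ge U\}$, $\alpha_k(x)=\mathbb{P}(\mathcal{A}^x_k)$, $\beta_k(x)=\mathbb{P}(\mathcal{B}^x_k)$. These sequences are nondecreasing in $k$, so the limits $\alpha(x),\beta(x)$ exist. *)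

(* Defs.v *)
From HB Require Import structures.
From mathcomp Require Import all_boot all_order all_algebra.
From mathcomp Require Import all_classical all_reals all_analysis.
Set Implicit Arguments. Unset Strict Implicit. Unset Printing Implicit Defensive.
Import Order.TTheory GRing.Theory Num.Theory numFieldNormedType.Exports.
Local Open Scope ring_scope.

(* A realisation of (xi_1,...,xi_k) is a tuple w : k.-tuple bool,
   with w_(n-1) = true  <->  xi_n = 1, and false <-> xi_n = -1. *)
Section Walk.
Variable k : nat.
Variable w : k.-tuple bool.

Definition xi (n : nat) : bool := nth false w n.-1.

Definition Xstep (n : nat) : int :=
  if ~~ xi n then -1
  else if (1 < n)%N && xi n.-1 then 2 else 1.

Definition Ssum (n : nat) : int := \sum_(1 <= i < n.+1) Xstep i.

Definition Sx (x : int) (n : nat) : int := x + Ssum n.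

Definition exits (L U x : int) (l : nat) : bool := (Sx x l <= L) || (U <= Sx x l).

Definition tau (L U x : int) : nat :=
  head k [seq l <- iota 0 k.+1 | exits L U x l].

Definition eventA (L U x : int) : bool :=
  [exists l : 'I_k.+1, (tau L U x == l) && (Sx x l <= L)].
Definition eventB (L U x : int) : bool :=
  [exists l : 'I_k.+1, (tau L U x == l) && (U <= Sx x l)].
End Walk.

Section Prob.
Variable R : realType.
Variable p : R.

Definition weight k (w : k.-tuple bool) : R :=
  \prod_(b <- w) (if b then p else 1 - p).

Definition alpha_k (L U x : int) (k : nat) : R :=
  \sum_(w : k.-tuple bool) weight w * (eventA w L U x)%:R.
Definition beta_k (L U x : int) (k : nat) : R :=
  \sum_(w : k.-tuple bool) weight w * (eventB w L U x)%:R.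

Definition alpha (L U x : int) : R := limn (alpha_k L U x).
Definition beta (L U x : int) : R := limn (beta_k L U x).

Definition alpha_system (L U : int) (f : int -> R) : Prop :=
  let q := 1 - p in
  [/\ f U = 0,
      f (U - 1) = q * f (U - 2),
      f (U - 2) = p * q * f (U - 2) + q * f (U - 3),
      (forall x : int, L + 1 <= x <= U - 3 ->
         f x = p * q * f x + p * f (x + 2) - p * q * f (x + 1) + q * f (x - 1))
    & f L = 1].

Definition beta_system (L U : int) (f : int -> R) : Prop :=
  let q := 1 - p in
  [/\ f U = 1,
      f (U - 1) = p + q * f (U - 2),
      f (U - 2) = p ^+ 2 + p * q * f (U - 2) + q * f (U - 3),
      (forall x : int, L + 1 <= x <= U - 3 ->
         f x = p * q * f x + p * f (x + 2) - p * q * f (x + 1) + q * f (x - 1))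
    & f L = 0].
End Prob.

(* Main.v *)
Require Import Defs.
From HB Require Import structures.
From mathcomp Require Import all_boot all_order all_algebra.
From mathcomp Require Import all_classical all_reals all_analysis.
From mathcomp Require Import ring lra zify.
Import Order.TTheory GRing.Theory Num.Theory numFieldNormedType.Exports.
Local Open Scope ring_scope.

Definition step (s b : bool) : int := if b then (if s then 2 else 1) else -1.

Definition posg (s : bool) (x : int) (w : seq bool) (n : nat) : int :=
  x + \sum_(0 <= i < n) step (nth false (s :: w) i) (nth false w i).

Lemma posg0 s x w : posg s x w 0 = x.
Proof. by rewrite /posg big_geq // addr0. Qed.

Lemma posgS s x b w n : posg s x (b :: w) n.+1 = posg b (x + step s b) w n.
Proof. by rewrite /posg big_nat_recl //= addrA. Qed.

Lemma Sx_posg k (w : k.-tuple bool) x n : Sx w x n = posg false x w n.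
Proof.
rewrite /Sx /posg /Ssum; congr (x + _).
rewrite big_add1 /=; apply: eq_bigr => i _.
rewrite /Xstep /xi /step /=.
by case: i => [|i] //=; case: (nth false w _).
Qed.

Lemma exists_ord_has n (R : pred nat) : [exists l : 'I_n, R l] = has R (iota 0 n).
Proof.
apply/existsP/hasP => [[l Hl]|[l]]; first by exists (nat_of_ord l); rewrite // mem_iota /=.
by rewrite mem_iota => /andP[_ Hl] HR; exists (Ordinal Hl).
Qed.

Lemma head_has (P Q : pred nat) d m n : (forall l, Q l -> P l) ->
  (~~ has P (iota m n) -> ~~ Q d) ->
  has (fun l => (head d [seq l <- iota m n | P l] == l) && Q l) (iota m n) =
  has (fun l => Q l && all (fun j => (j < l)%N ==> ~~ P j) (iota m n)) (iota m n).
Proof.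
move=> QP; elim: n m => [|n IH] m Hd //=.
case: (boolP (P m)) => Pm /=.
  rewrite eqxx /=.
  have -> : all (fun j => (j < m)%N ==> ~~ P j) (iota m.+1 n).
    by apply/allP => j; rewrite mem_iota => /andP[Hj _]; rewrite ltnNge (ltnW Hj).
  rewrite ltnn /= andbT.
  have -> : has (fun l => (m == l) && Q l) (iota m.+1 n) = false.
    apply/hasP => -[l]; rewrite mem_iota => /andP[Hl _] /andP[/eqP E _].
    by rewrite E ltnn in Hl.
  rewrite orbF; apply/esym/orb_idr => /hasP[l]; rewrite mem_iota => /andP[Hl _].
  by rewrite Hl /= andbF.
have Qm : Q m = false by apply/negP => /QP; rewrite (negbTE Pm).
rewrite Qm andbF /= IH; last by move=> H; apply: Hd; rewrite /= (negbTE Pm).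
apply: eq_in_has => l; rewrite mem_iota => /andP[Hl _].
by rewrite Hl.
Qed.

Lemma iota_shift m n : iota m.+1 n = map S (iota m n).
Proof. by elim: n m => [|n IH] m //=; rewrite IH. Qed.

Lemma has_map' (T1 T2 : Type) (a : pred T2) (f : T1 -> T2) s :
  has a (map f s) = has (fun x => a (f x)) s.
Proof. by rewrite has_map. Qed.

Section Hit.
Variables (Q0 ex : int -> bool).

Fixpoint hit (s : bool) (x : int) (w : seq bool) : bool :=
  Q0 x || (~~ ex x && (if w is b :: w' then hit b (x + step s b) w' else false)).

Lemma hit_has s x w :
  hit s x w = has (fun l => Q0 (posg s x w l) &&
     all (fun j => (j < l)%N ==> ~~ ex (posg s x w j)) (iota 0 (size w).+1))
     (iota 0 (size w).+1).
Proof.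
elim: w s x => [|b w IH] s x; first by rewrite /= posg0 andbF !orbF andbT.
have E : iota 0 (size (b :: w)).+1 = [:: 0%N] ++ map S (iota 0 (size w).+1).
  by rewrite (_ : iota 0 (size (b :: w)).+1 = 0%N :: iota 1 (size w).+1) // iota_shift.
rewrite E has_cat has_seq1 has_map' all_cat all_seq1 posg0 ltnn implyFb andTb.
rewrite [hit s x _]/= IH.
have -> : all (fun j => (j < 0)%N ==> ~~ ex (posg s x (b :: w) j)) (map S (iota 0 (size w).+1)) = true.
  by apply/allP => j.
rewrite andbT; congr (_ || _).
apply/idP/idP.
  case/andP => Hx /hasP[l Hl] /andP[HQ Hall].
  apply/hasP; exists l => //; rewrite posgS HQ andTb all_cat all_seq1 posg0 Hx andTb.
  rewrite all_map; apply/allP => j Hj /=.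
  by rewrite posgS ltnS; apply: (allP Hall).
case/hasP => l Hl /andP[HQ Hall].
rewrite all_cat all_seq1 posg0 all_map in Hall.
case/andP: Hall => Hx Hall; rewrite implyTb in Hx.
rewrite Hx andTb; apply/hasP; exists l => //.
rewrite posgS in HQ; rewrite HQ andTb.
apply/allP => j Hj; have := allP Hall j Hj.
by rewrite /= posgS ltnS.
Qed.
End Hit.

Lemma has_pred0_dummy : True. Proof. by []. Qed.

Lemma event_hit k (w : k.-tuple bool) (L U x : int) (Q0 : int -> bool) :
  (forall y, Q0 y -> (y <= L) || (U <= y)) ->
  [exists l : 'I_k.+1, (tau w L U x == l) && Q0 (Sx w x l)] =
  hit Q0 (fun y => (y <= L) || (U <= y)) false x w.
Proof.
move=> HQ.
rewrite (exists_ord_has k.+1 (fun l => (tau w L U x == l) && Q0 (Sx w x l))).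
rewrite hit_has size_tuple /tau.
have -> : [seq l <- iota 0 k.+1 | exits w L U x l] =
          [seq l <- iota 0 k.+1 | (fun l => (posg false x w l <= L) || (U <= posg false x w l)) l].
  by apply: eq_filter => l; rewrite /exits Sx_posg.
have -> : (fun l => (head k [seq l <- iota 0 k.+1 | (fun l => (posg false x w l <= L) || (U <= posg false x w l)) l] == l) && Q0 (Sx w x l)) =
  (fun l => (head k [seq l <- iota 0 k.+1 | (fun l => (posg false x w l <= L) || (U <= posg false x w l)) l] == l) && Q0 (posg false x w l)).
  by apply: funext => l; rewrite Sx_posg.
rewrite (@head_has (fun l => (posg false x w l <= L) || (U <= posg false x w l))
                  (fun l => Q0 (posg false x w l))) //.
  by move=> l /HQ.
move=> Hn; apply/negP => /HQ Hk; move/negP: Hn; apply.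
by apply/hasP; exists k; rewrite // mem_iota add0n leq0n ltnSn.
Qed.

Lemma eventA_hit k (w : k.-tuple bool) (L U x : int) :
  eventA w L U x = hit (fun y => y <= L) (fun y => (y <= L) || (U <= y)) false x w.
Proof. by rewrite -event_hit // => y ->. Qed.

Lemma eventB_hit k (w : k.-tuple bool) (L U x : int) :
  eventB w L U x = hit (fun y => U <= y) (fun y => (y <= L) || (U <= y)) false x w.
Proof. by rewrite -event_hit // => y ->; rewrite orbT. Qed.
Section S2.
Variable R : realType.
Lemma sum_tupleS k (F : seq bool -> R) :
  \sum_(w : k.+1.-tuple bool) F w =
  \sum_(t : k.-tuple bool) F (true :: t) + \sum_(t : k.-tuple bool) F (false :: t).
Proof.
rewrite (reindex (fun bt : bool * k.-tuple bool => [tuple of bt.1 :: bt.2])) /=.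
  rewrite -(pair_big xpredT xpredT (fun b (t : k.-tuple bool) => F (b :: t))) /=.
  by rewrite big_bool.
apply: onW_bij.
exists (fun t : k.+1.-tuple bool => (thead t, [tuple of behead t])).
  by move=> [b t] /=; congr (_, _); apply: val_inj.
by move=> t; rewrite [RHS]tuple_eta; apply: val_inj.
Qed.

Lemma sum_tuple0 (F : seq bool -> R) : \sum_(w : 0.-tuple bool) F w = F [::].
Proof.
rewrite (eq_bigr (fun _ => F [::])); last by move=> w _; rewrite (tuple0 w).
by rewrite sumr_const card_tuple expn0.
Qed.
End S2.

Section Val.
Variables (R : realType) (p : R) (Q0 ex : int -> bool).

Definition wseq (w : seq bool) : R := \prod_(b <- w) (if b then p else 1 - p).
Definition val k s x : R := \sum_(w : k.-tuple bool) wseq w * (hit Q0 ex s x w)%:R.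

Lemma wseq_cons b w : wseq (b :: w) = (if b then p else 1 - p) * wseq w.
Proof. by rewrite /wseq big_cons. Qed.

Lemma wsum k : \sum_(w : k.-tuple bool) wseq w = 1.
Proof.
elim: k => [|k IH]; first by rewrite (@sum_tuple0 R wseq) /wseq big_nil.
rewrite (@sum_tupleS R _ wseq).
under eq_bigr do rewrite wseq_cons.
under [X in _ + X]eq_bigr do rewrite wseq_cons.
by rewrite -!mulr_sumr IH !mulr1 addrC subrK.
Qed.

Lemma val0 s x : val 0 s x = (Q0 x)%:R.
Proof.
rewrite /val (@sum_tuple0 R (fun w => wseq w * (hit Q0 ex s x w)%:R)) /wseq big_nil mul1r /=.
by rewrite andbF orbF.
Qed.

Lemma valS k s x : val k.+1 s x =
  if Q0 x then 1 else if ex x then 0 else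
  p * val k true (x + (if s then 2 else 1)) + (1 - p) * val k false (x - 1).
Proof.
rewrite /val (@sum_tupleS R _ (fun w => wseq w * (hit Q0 ex s x w)%:R)).
under eq_bigr do rewrite wseq_cons [hit _ _ _ _ (_ :: _)]/=.
under [X in _ + X]eq_bigr do rewrite wseq_cons [hit _ _ _ _ (_ :: _)]/=.
case: (Q0 x) => /=.
  under eq_bigr do rewrite mulr1.
  under [X in _ + X]eq_bigr do rewrite mulr1.
  by rewrite -!mulr_sumr wsum !mulr1 addrC subrK.
case: (ex x) => /=.
  under eq_bigr do rewrite mulr0.
  under [X in _ + X]eq_bigr do rewrite mulr0.
  by rewrite !big1 ?addr0.
rewrite !mulr_sumr; congr (_ + _); apply: eq_bigr => w _; rewrite mulrA //.
Qed.
End Val.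

Local Open Scope classical_set_scope.
Section Lim.
Variables (R : realType) (p : R) (Q0 ex : int -> bool).
Hypothesis Hp : 0 < p < 1.

Local Notation v := (@val R p Q0 ex).

Lemma val_bounds k s x : 0 <= v k s x <= 1.
Proof.
case/andP: Hp => p0 p1.
elim: k s x => [|k IH] s x; first by rewrite val0; case: (Q0 x); rewrite ?ler01 ?lexx. 
rewrite valS; case: (Q0 x); first by rewrite ler01 lexx.
case: (ex x); first by rewrite ler01 lexx.
have /andP[a0 a1] := IH true (x + (if s then 2 else 1)).
have /andP[b0 b1] := IH false (x - 1).
apply/andP; split.
  by apply: addr_ge0; apply: mulr_ge0 => //; rewrite ?subr_ge0 ltW.
have q0 : 0 <= 1 - p by rewrite subr_ge0 ltW.
rewrite -[leRHS](subrK p) addrC.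
by apply: lerD; rewrite -[leRHS]mulr1; apply: ler_wpM2l => //; apply: ltW.
Qed.

Lemma val_ge0 k s x : 0 <= v k s x.
Proof. by case/andP: (val_bounds k s x). Qed.

Lemma val_mono k s x : v k s x <= v k.+1 s x.
Proof.
case/andP: Hp => p0 p1.
have q0 : 0 <= 1 - p by rewrite subr_ge0 ltW.
elim: k s x => [|k IH] s x.
  rewrite val0 valS; case: (Q0 x) => //; case: (ex x) => //=.
  rewrite (_ : false%:R = 0 :> R) //; have p0' := ltW p0; by apply: addr_ge0; apply: mulr_ge0 => //; apply: val_ge0.
rewrite (valS _ _ _ _ k.+1) valS; case: (Q0 x) => //; case: (ex x) => //.
apply: lerD; apply: ler_wpM2l => //; exact: ltW.
Qed.

Definition V s x : R := limn (fun k => v k s x).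

Lemma val_cvg s x : (fun k => v k s x) @ \oo --> V s x.
Proof.
have H : (fun k => v k s x) @ \oo --> sup (range (fun k => v k s x)).
  apply: nondecreasing_cvgn.
    by apply/nondecreasing_seqP => n; apply: val_mono.
  by exists 1 => _ [n _ <-]; case/andP: (val_bounds n s x).
by rewrite /V (cvg_lim _ H).
Qed.

Lemma V_ge0 s x : 0 <= V s x.
Proof.
apply: (le_trans (_ : 0 <= v 0 s x)); first by case/andP: (val_bounds 0 s x).
apply: nondecreasing_cvgn_le.
  by apply/nondecreasing_seqP => n; apply: val_mono.
by apply/cvg_ex; exists (V s x); apply: val_cvg.
Qed.

Lemma V_rec s x : V s x =
  if Q0 x then 1 else if ex x then 0 else
  p * V true (x + (if s then 2 else 1)) + (1 - p) * V false (x - 1).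
Proof.
have H1 := val_cvg s x; rewrite -cvg_shiftS in H1.
rewrite -(cvg_lim _ H1).
have E : (fun k => v k.+1 s x) = (fun k => if Q0 x then 1 else if ex x then 0 else
  p * v k true (x + (if s then 2 else 1)) + (1 - p) * v k false (x - 1)).
  by apply: funext => k; rewrite valS.
apply: cvg_lim => //.
rewrite E; case: (Q0 x); first exact: cvg_cst.
case: (ex x); first exact: cvg_cst.
apply: cvgD; apply: cvgMl_tmp; exact: val_cvg.
exact: norm_hausdorff.
Qed.
End Lim.
Section Uniq.
Variables (R : realFieldType) (p : R) (L U : int).
Hypothesis Hq : 1 - p != 0.
Hypothesis HLU : 4 <= U - L.

Definition top_hom (h : int -> R) :=
  [/\ h U = 0, h (U - 1) = (1 - p) * h (U - 2),
      h (U - 2) = p * (1 - p) * h (U - 2) + (1 - p) * h (U - 3)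
    & forall x : int, L + 1 <= x <= U - 3 ->
         h x = p * (1 - p) * h x + p * h (x + 2) - p * (1 - p) * h (x + 1) + (1 - p) * h (x - 1)].

Lemma qcancel (y : R) : (1 - p) * y = 0 -> y = 0.
Proof. by move/eqP; rewrite mulf_eq0 (negbTE Hq) /= => /eqP. Qed.

Lemma top_zero h : top_hom h -> h (U - 2) = 0 -> forall x, L <= x <= U -> h x = 0.
Proof.
case=> H0 H1 H2 H3 Hz.
have C : forall n : nat, L + 2 <= U - n%:Z ->
    [/\ h (U - n%:Z) = 0, h (U - n%:Z - 1) = 0 & h (U - n%:Z - 2) = 0].
  elim=> [|n IH] Hn.
    by rewrite subr0 H0 H1 Hz mulr0.
  have [a1 a2 a3] := IH ltac:(lia).
  have -> : U - n.+1%:Z = U - n%:Z - 1 by lia.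
  have -> : U - n%:Z - 1 - 1 = U - n%:Z - 2 by lia.
  split => //.
  have -> : U - n%:Z - 1 - 2 = U - n%:Z - 2 - 1 by lia.
  case: n IH Hn a1 a2 a3 => [|n] IH Hn a1 a2 a3.
    apply: qcancel.
    have E : U - 0%:Z - 2 - 1 = U - 3 by lia.
    rewrite E; move: H2; rewrite Hz mulr0 add0r => <- //.
  have := H3 (U - n.+1%:Z - 2) ltac:(lia).
  have -> : U - n.+1%:Z - 2 + 2 = U - n.+1%:Z by lia.
  have -> : U - n.+1%:Z - 2 + 1 = U - n.+1%:Z - 1 by lia.
  rewrite a1 a2 a3 !mulr0 addr0 subr0 add0r => E.
  by apply: qcancel; rewrite -E.
move=> x Hx.
have [Hx2|Hx2] := lerP (L + 2) x.
  have := C (absz (U - x)%R) ltac:(lia).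
  have -> : U - (absz (U - x)%R)%:Z = x by lia.
  by case.
have := C (absz (U - (L + 2))%R) ltac:(lia).
have -> : U - (absz (U - (L + 2))%R)%:Z = L + 2 by lia.
case=> _ b1 b2.
have [->|->] : x = L + 2 - 2 \/ x = L + 2 - 1 by lia.
  by [].
by [].
Qed.

Lemma top_lin h1 h2 c : top_hom h1 -> top_hom h2 -> top_hom (fun x => h1 x - c * h2 x).
Proof.
case=> A0 A1 A2 A3 [B0 B1 B2 B3]; split.
- by rewrite A0 B0 mulr0 subr0.
- by rewrite A1 B1; ring.
- by rewrite {1}A2 {1}B2; ring.
- by move=> x Hx; rewrite {1}(A3 x Hx) {1}(B3 x Hx); ring.
Qed.

Lemma top_uniq h a : top_hom h -> h L = 0 -> top_hom a -> a L = 1 -> a (U - 2) != 0 ->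
  forall x, L <= x <= U -> h x = 0.
Proof.
move=> Th hL Ta aL a2 x Hx.
set c := h (U - 2) / a (U - 2).
have Tk := top_lin _ _ c Th Ta.
have Z := @top_zero _ Tk.
have kz : h (U - 2) - c * a (U - 2) = 0 by rewrite /c mulfVK // subrr.
have := Z kz L ltac:(lia); rewrite hL aL mulr1 sub0r => /eqP; rewrite oppr_eq0 => /eqP c0.
have := Z kz x Hx; rewrite c0 mul0r subr0 => //.
Qed.
End Uniq.

Section Gen.
Variables (R : realFieldType) (p : R) (L U : int) (a g : int -> R) (c : R).
Hypothesis HLU : 4 <= U - L.
Hypothesis Ha : forall x, L < x < U -> a x = p * g (x + 1) + (1 - p) * a (x - 1).
Hypothesis Hg : forall x, L < x < U -> g x = p * g (x + 2) + (1 - p) * a (x - 1).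
Hypothesis gU : forall y, U <= y -> g y = c.

Lemma gen_S1 : a (U - 1) = p * c + (1 - p) * a (U - 2).
Proof.
rewrite Ha; last by lia.
have -> : U - 1 + 1 = U by lia.
have -> : U - 1 - 1 = U - 2 by lia.
by rewrite gU.
Qed.

Lemma gen_S2 : a (U - 2) = p ^+ 2 * c + p * (1 - p) * a (U - 2) + (1 - p) * a (U - 3).
Proof.
rewrite {1}Ha; last by lia.
have -> : U - 2 + 1 = U - 1 by lia.
have -> : U - 2 - 1 = U - 3 by lia.
rewrite Hg; last by lia.
have -> : U - 1 + 2 = U + 1 by lia.
have -> : U - 1 - 1 = U - 2 by lia.
rewrite gU; last by lia.
by ring.
Qed.

Lemma gen_S3 x : L + 1 <= x <= U - 3 ->
  a x = p * (1 - p) * a x + p * a (x + 2) - p * (1 - p) * a (x + 1) + (1 - p) * a (x - 1).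
Proof.
move=> Hx.
have h1 := Ha x ltac:(lia).
have h2 := Hg (x + 1) ltac:(lia).
have h3 := Ha (x + 2) ltac:(lia).
have e1 : x + 1 + 2 = x + 3 by lia.
have e2 : x + 1 - 1 = x by lia.
have e3 : x + 2 + 1 = x + 3 by lia.
have e4 : x + 2 - 1 = x + 1 by lia.
rewrite e1 e2 in h2; rewrite e3 e4 in h3.
rewrite {1}h1 h2 h3; ring.
Qed.
End Gen.

Lemma alpha_V (R : realType) (p : R) (L U x : int) :
  alpha p L U x = V R p (fun y => y <= L) (fun y => (y <= L) || (U <= y)) false x.
Proof.
rewrite /alpha /V; congr (lim (_ @ \oo)); apply: funext => k.
rewrite /alpha_k /val; apply: eq_bigr => w _; by rewrite eventA_hit.
Qed.

Lemma beta_V (R : realType) (p : R) (L U x : int) :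
  beta p L U x = V R p (fun y => U <= y) (fun y => (y <= L) || (U <= y)) false x.
Proof.
rewrite /beta /V; congr (lim (_ @ \oo)); apply: funext => k.
rewrite /beta_k /val; apply: eq_bigr => w _; by rewrite eventB_hit.
Qed.

Theorem theorem2p2 (R : realType) (p : R) (L U : int) :
  0 < p < 1 -> 4 <= U - L ->
  (alpha_system p L U (alpha p L U) /\
   forall f : int -> R, alpha_system p L U f ->
     forall x : int, L <= x <= U -> f x = alpha p L U x) /\
  (beta_system p L U (beta p L U) /\
   forall f : int -> R, beta_system p L U f ->
     forall x : int, L <= x <= U -> f x = beta p L U x).
Proof.
move=> Hp HLU.
have Hq : 1 - p != 0 by case/andP: Hp => _ p1; rewrite subr_eq0 eq_sym lt_eqF.
set exA := fun y : int => (y <= L) || (U <= y).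
set QA := fun y : int => y <= L.
set QB := fun y : int => U <= y.
have EA : alpha p L U = V R p QA exA false by apply: funext => x; rewrite alpha_V.
have EB : beta p L U = V R p QB exA false by apply: funext => x; rewrite beta_V.
rewrite EA EB.
have RA x : L < x < U -> V R p QA exA false x = p * V R p QA exA true (x + 1) + (1 - p) * V R p QA exA false (x - 1).
  move=> Hx; rewrite (@V_rec R p QA exA Hp false x) /QA /exA.
  have -> : (x <= L) = false by apply/negbTE; rewrite -ltNge; lia.
  by have -> : (U <= x) = false by apply/negbTE; rewrite -ltNge; lia.
have GA x : L < x < U -> V R p QA exA true x = p * V R p QA exA true (x + 2) + (1 - p) * V R p QA exA false (x - 1).
  move=> Hx; rewrite (@V_rec R p QA exA Hp true x) /QA /exA.
  have -> : (x <= L) = false by apply/negbTE; rewrite -ltNge; lia.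
  by have -> : (U <= x) = false by apply/negbTE; rewrite -ltNge; lia.
have UA y : U <= y -> V R p QA exA true y = 0.
  move=> Hy; rewrite (@V_rec R p QA exA Hp true y) /QA /exA Hy orbT.
  by have -> : (y <= L) = false by apply/negbTE; rewrite -ltNge; lia.
have RB x : L < x < U -> V R p QB exA false x = p * V R p QB exA true (x + 1) + (1 - p) * V R p QB exA false (x - 1).
  move=> Hx; rewrite (@V_rec R p QB exA Hp false x) /QB /exA.
  have -> : (x <= L) = false by apply/negbTE; rewrite -ltNge; lia.
  by have -> : (U <= x) = false by apply/negbTE; rewrite -ltNge; lia.
have GB x : L < x < U -> V R p QB exA true x = p * V R p QB exA true (x + 2) + (1 - p) * V R p QB exA false (x - 1).
  move=> Hx; rewrite (@V_rec R p QB exA Hp true x) /QB /exA.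
  have -> : (x <= L) = false by apply/negbTE; rewrite -ltNge; lia.
  by have -> : (U <= x) = false by apply/negbTE; rewrite -ltNge; lia.
have UB y : U <= y -> V R p QB exA true y = 1.
  by move=> Hy; rewrite (@V_rec R p QB exA Hp true y) /QB Hy.
have AU : V R p QA exA false U = 0.
  rewrite (@V_rec R p QA exA Hp false U) /QA /exA lexx orbT.
  by have -> : (U <= L) = false by apply/negbTE; rewrite -ltNge; lia.
have AL : V R p QA exA false L = 1.
  by rewrite (@V_rec R p QA exA Hp false L) /QA lexx.
have BU : V R p QB exA false U = 1.
  by rewrite (@V_rec R p QB exA Hp false U) /QB lexx.
have BL : V R p QB exA false L = 0.
  rewrite (@V_rec R p QB exA Hp false L) /QB /exA lexx.
  by have -> : (U <= L) = false by apply/negbTE; rewrite -ltNge; lia.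
set a := V R p QA exA false.
set b := V R p QB exA false.
have SA : alpha_system p L U a.
  split => //.
  - by rewrite /a /b (@gen_S1 R p L U _ _ _ HLU RA UA) mulr0 add0r.
  - by rewrite /a /b {1}(@gen_S2 R p L U _ _ _ HLU RA GA UA) mulr0 add0r.
  - exact: (@gen_S3 R p L U _ _ HLU RA GA).
have SB : beta_system p L U b.
  split => //.
  - by rewrite /a /b (@gen_S1 R p L U _ _ _ HLU RB UB) mulr1.
  - by rewrite /a /b {1}(@gen_S2 R p L U _ _ _ HLU RB GB UB) mulr1.
  - exact: (@gen_S3 R p L U _ _ HLU RB GB).
have TA : top_hom R p L U a by case: SA => ? ? ? ? ?; split.
have apos : forall n : nat, L + n%:Z < U -> 0 < a (L + n%:Z).
  elim=> [|n IH] Hn; first by rewrite addr0 /a AL ltr01.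
  rewrite /a RA; last by lia.
  have -> : L + n.+1%:Z - 1 = L + n%:Z by lia.
  apply: (@lt_le_trans _ _ ((1 - p) * a (L + n%:Z))).
    apply: mulr_gt0; first by case/andP: Hp => _ p1; rewrite subr_gt0.
    by apply: IH; lia.
  rewrite lerDr; apply: mulr_ge0; first by case/andP: Hp => /ltW.
  exact: V_ge0.
have a2 : a (U - 2) != 0.
  have := apos (absz (U - 2 - L)%R) ltac:(lia).
  have -> : L + (absz (U - 2 - L)%R)%:Z = U - 2 by lia.
  by move=> /gt_eqF ->.
split; split => //.
- move=> f Sf x Hx.
  have Tf : top_hom R p L U f by case: Sf => ? ? ? ? ?; split.
  have Th := @top_lin R p L U _ _ 1 Tf TA.
  have := @top_uniq R p L U Hq HLU _ _ Th _ TA AL a2 x Hx.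
  have H0 : f L - 1 * a L = 0 by case: Sf => _ _ _ _ ->; rewrite /a AL mul1r subrr.
  by move=> /(_ H0) /eqP; rewrite mul1r subr_eq0 => /eqP.
- move=> f Sf x Hx.
  have Th : top_hom R p L U (fun x => f x - b x).
    case: Sf => F0 F1 F2 F3 F4; case: SB => B0 B1 B2 B3 B4; split.
    + by rewrite F0 B0 subrr.
    + by rewrite F1 B1; ring.
    + by rewrite {1}F2 {1}B2; ring.
    + by move=> y Hy; rewrite {1}(F3 y Hy) {1}(B3 y Hy); ring.
  have := @top_uniq R p L U Hq HLU _ _ Th _ TA AL a2 x Hx.
  have H0 : f L - b L = 0 by case: Sf => _ _ _ _ ->; rewrite /b BL subrr.
  by move=> /(_ H0) /eqP; rewrite subr_eq0 => /eqP.
Qed.
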